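(* For any locale $L$, its DeMorganization (the largest dense extremally disconnected sublocale of $L$) is a fitted sublocale of $L$.
   Context: A frame (locale) $L$ is a complete lattice in which finite meets distribute over arbitrary joins; $a\to b$ denotes the Heyting implication and $a^*=a\to0$ the pseudocomplement. A sublocale of $L$ is a subset $S\subseteq L$ closed under arbitrary meets such that $a\to s\in S$ for all $a\in L$, $s\in S$; it is a frame under the inherited order. A sublocale $S$ is dense if $\bigwedge S=0$. A frame is extremally disconnected if $x^*\vee x^{**}=1$ for all its elements. The open sublocale of $a\in L$ is $\mathfrak{o}(a)=\{a\to b\mid b\in L\}$. A sublocale is fitted if it is an intersection of a family of open sublocales. *)

(* Defs.v *)
Set Implicit Arguments.

Record Frame := {
  carrier :> Type;
  le : carrier -> carrier -> Prop;
  sup : (carrier -> Prop) -> carrier;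
  meet : carrier -> carrier -> carrier;
  le_refl : forall x, le x x;
  le_trans : forall x y z, le x y -> le y z -> le x z;
  le_antisym : forall x y, le x y -> le y x -> x = y;
  sup_ub : forall (A : carrier -> Prop) a, A a -> le a (sup A);
  sup_least : forall (A : carrier -> Prop) u,
      (forall a, A a -> le a u) -> le (sup A) u;
  meet_glb : forall x a b, le x (meet a b) <-> (le x a /\ le x b);
  meet_sup_distr : forall a (A : carrier -> Prop),
      meet a (sup A) = sup (fun y => exists s, A s /\ y = meet a s)
}.

Arguments le {f} _ _.
Arguments sup {f} _.
Arguments meet {f} _ _.

Section FrameOps.
Variable L : Frame.

Definition inf (A : L -> Prop) : L :=
  sup (fun x => forall a, A a -> le x a).
Definition top : L := sup (fun _ => True).
Definition bot : L := sup (fun _ => False).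
Definition imp (a b : L) : L := sup (fun x => le (meet x a) b).
Definition pc (a : L) : L := imp a bot.

Definition sublocale (S : L -> Prop) : Prop :=
  (forall A : L -> Prop, (forall a, A a -> S a) -> S (inf A)) /\
  (forall a s, S s -> S (imp a s)).

(* Frame operations of the sublocale S under the inherited order.
   Joins in S: the least element of S above all elements of A
   (which exists since S is closed under meets). *)
Definition sub_sup (S : L -> Prop) (A : L -> Prop) : L :=
  inf (fun u => S u /\ forall a, A a -> le a u).
Definition sub_join (S : L -> Prop) (a b : L) : L :=
  sub_sup S (fun x => x = a \/ x = b).
Definition sub_top (S : L -> Prop) : L := sub_sup S S.
Definition sub_bot (S : L -> Prop) : L := sub_sup S (fun _ => False).
Definition sub_meet (S : L -> Prop) (a b : L) : L := meet a b.
Definition sub_imp (S : L -> Prop) (a b : L) : L :=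
  sub_sup S (fun y => S y /\ le (sub_meet S y a) b).
Definition sub_pc (S : L -> Prop) (a : L) : L := sub_imp S a (sub_bot S).

Definition dense (S : L -> Prop) : Prop := inf S = bot.

Definition extremally_disconnected_sub (S : L -> Prop) : Prop :=
  forall x, S x ->
    sub_join S (sub_pc S x) (sub_pc S (sub_pc S x)) = sub_top S.

Definition dense_ED_sublocale (S : L -> Prop) : Prop :=
  sublocale S /\ dense S /\ extremally_disconnected_sub S.

Definition DeMorganization (S : L -> Prop) : Prop :=
  dense_ED_sublocale S /\
  (forall T, dense_ED_sublocale T -> forall x, T x -> S x).

Definition open_sub (a : L) : L -> Prop := fun x => exists b, x = imp a b.

Definition fitted (S : L -> Prop) : Prop :=
  exists F : L -> Prop, forall x, S x <-> (forall a, F a -> open_sub a x).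

End FrameOps.

Arguments inf {L} _.
Arguments top {L}.
Arguments bot {L}.
Arguments imp {L} _ _.
Arguments pc {L} _.
Arguments sublocale {L} _.
Arguments sub_sup {L} _ _.
Arguments sub_join {L} _ _ _.
Arguments sub_top {L} _.
Arguments sub_bot {L} _.
Arguments sub_meet {L} _ _ _.
Arguments sub_imp {L} _ _ _.
Arguments sub_pc {L} _ _.
Arguments dense {L} _.
Arguments extremally_disconnected_sub {L} _.
Arguments dense_ED_sublocale {L} _.
Arguments DeMorganization {L} _.
Arguments open_sub {L} _ _.
Arguments fitted {L} _.

(* Main.v *)
Require Import Defs.

Lemma ml (L : Frame) (a b : L) : le (meet a b) a.
Proof. exact (proj1 (proj1 (meet_glb L _ a b) (le_refl L _))). Qed.
Lemma mr (L : Frame) (a b : L) : le (meet a b) b.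
Proof. exact (proj2 (proj1 (meet_glb L _ a b) (le_refl L _))). Qed.
Lemma mg (L : Frame) (x a b : L) : le x a -> le x b -> le x (meet a b).
Proof. intros; apply (proj2 (meet_glb L x a b)); auto. Qed.
Lemma ltr (L : Frame) (x y z : L) : le x y -> le y z -> le x z.
Proof. apply le_trans. Qed.
Lemma inf_lb (L : Frame) (A : L -> Prop) a : A a -> le (inf A) a.
Proof. intros Ha. unfold inf. apply sup_least. intros x Hx. apply Hx, Ha. Qed.
Lemma inf_glb (L : Frame) (A : L -> Prop) x : (forall a, A a -> le x a) -> le x (inf A).
Proof. intros H. unfold inf. apply (sup_ub L (fun x => forall a, A a -> le x a)). exact H. Qed.
Lemma bot_le (L : Frame) (x : L) : le bot x.
Proof. unfold bot. apply sup_least. intros a []. Qed.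
Lemma le_top (L : Frame) (x : L) : le x top.
Proof. unfold top. apply (sup_ub L (fun _ => True)). exact I. Qed.

Lemma adj1 (L : Frame) (x a b : L) : le (meet x a) b -> le x (imp a b).
Proof. intros H. unfold imp. apply (sup_ub L (fun x => le (meet x a) b)). exact H. Qed.
Lemma adj2 (L : Frame) (x a b : L) : le x (imp a b) -> le (meet x a) b.
Proof.
  intros H.
  apply ltr with (meet a (imp a b)).
  - apply mg. apply mr. eapply ltr. apply ml. exact H.
  - unfold imp. rewrite meet_sup_distr. apply sup_least.
    intros y [s [Hs ->]].
    eapply ltr; [|exact Hs]. apply mg. apply mr. apply ml.
Qed.

Lemma imp_mono_r (L : Frame) (a b b' : L) : le b b' -> le (imp a b) (imp a b').
Proof. intros H. apply adj1. eapply ltr; [|exact H]. apply adj2, le_refl. Qed.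
Lemma imp_anti_l (L : Frame) (a a' b : L) : le a a' -> le (imp a' b) (imp a b).
Proof.
  intros H. apply adj1. eapply ltr; [|apply adj2, le_refl].
  apply mg. apply ml. eapply ltr. apply mr. exact H.
Qed.
Lemma le_imp (L : Frame) (c x : L) : le x (imp c x).
Proof. apply adj1, ml. Qed.
Lemma imp_idem (L : Frame) (a b : L) : imp a (imp a b) = imp a b.
Proof.
  apply le_antisym; [|apply le_imp].
  apply adj1. eapply ltr; [|apply adj2, adj2, le_refl].
  apply mg. apply le_refl. apply mr.
Qed.


Lemma pc_meet (L : Frame) (x : L) : le (meet (pc x) x) bot.
Proof. apply adj2, le_refl. Qed.
Lemma pc_meet' (L : Frame) (x : L) : le (meet x (pc x)) bot.
Proof. eapply ltr; [|apply (pc_meet L x)]. apply mg. apply mr. apply ml. Qed.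

Lemma T_bot (L : Frame) (T : L -> Prop) : sublocale T -> dense T -> T bot.
Proof. intros [Hi _] Hd. rewrite <- Hd. apply Hi. auto. Qed.
Lemma T_top (L : Frame) (T : L -> Prop) : sublocale T -> T top.
Proof.
  intros [Hi _].
  replace (@top L) with (inf (fun _ : L => False)).
  - apply Hi. intros _ [].
  - apply le_antisym. apply le_top. apply inf_glb. intros _ [].
Qed.
Lemma sub_bot_eq (L : Frame) (T : L -> Prop) : sublocale T -> dense T -> sub_bot T = bot.
Proof.
  intros Hs Hd. apply le_antisym; [|apply bot_le].
  apply inf_lb. split. apply T_bot; auto. intros _ [].
Qed.
Lemma sub_pc_eq (L : Frame) (T : L -> Prop) x : sublocale T -> dense T -> T x ->
  sub_pc T x = pc x.
Proof.
  intros Hs Hd Hx. unfold sub_pc, sub_imp. rewrite sub_bot_eq by auto.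
  unfold sub_sup, sub_meet. apply le_antisym.
  - apply inf_lb. split.
    + apply (proj2 Hs). apply T_bot; auto.
    + intros y [_ Hy]. apply adj1. exact Hy.
  - apply inf_glb. intros u [_ Hu]. apply Hu. split.
    + apply (proj2 Hs). apply T_bot; auto.
    + apply pc_meet.
Qed.
Lemma sub_top_eq (L : Frame) (T : L -> Prop) : sublocale T -> sub_top T = top.
Proof.
  intros Hs. apply le_antisym; [apply le_top|].
  apply inf_glb. intros u [_ Hu]. apply Hu. apply T_top; auto.
Qed.

Definition sup2 (L : Frame) (a b : L) : L := sup (fun x => x = a \/ x = b).
Definition cc (L : Frame) (a : L) : L := sup2 L (pc a) (pc (pc a)).

Lemma claimA (L : Frame) (T : L -> Prop) : dense_ED_sublocale T ->
  forall a t, T t -> imp (cc L a) t = t.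
Proof.
  intros [Hs [Hd He]] a t Ht.
  apply le_antisym; [|apply le_imp].
  set (c := cc L a).
  set (w := imp (imp c t) t).
  assert (Tw : T w) by (apply (proj2 Hs); exact Ht).
  set (x := inf (fun u => T u /\ le a u)).
  assert (Tx : T x) by (apply (proj1 Hs); intros u [Hu _]; exact Hu).
  assert (Hax : le a x) by (apply inf_glb; intros u [_ Hu]; exact Hu).
  assert (Hxa : le x (pc (pc a))).
  { apply inf_lb. split. apply (proj2 Hs). apply T_bot; auto.
    apply adj1. apply pc_meet'. }
  assert (Hpx : pc x = pc a).
  { apply le_antisym. apply imp_anti_l; exact Hax.
    apply adj1. eapply ltr; [|apply (pc_meet L (pc a))].
    apply mg. eapply ltr. apply mr. exact Hxa. apply ml. }
  assert (Tpx : T (pc x)) by (apply (proj2 Hs); apply T_bot; auto).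
  pose proof (He x Tx) as E.
  rewrite (sub_pc_eq L T x Hs Hd Tx) in E.
  rewrite (sub_pc_eq L T (pc x) Hs Hd Tpx) in E.
  rewrite sub_top_eq in E by auto.
  rewrite Hpx in E.
  assert (Hcw : le c w).
  { apply adj1. eapply ltr; [|apply adj2, le_refl]. apply mg. apply mr. apply ml. }
  assert (Htw : le top w).
  { rewrite <- E. apply inf_lb. split. exact Tw.
    intros y [-> | ->]; eapply ltr; try exact Hcw; unfold c, cc, sup2;
      apply (sup_ub L (fun x => x = pc a \/ x = pc (pc a))); auto. }
  eapply ltr; [|apply adj2; exact Htw]. apply mg. apply le_top. apply le_refl.
Qed.

Definition NN (L : Frame) : L -> Prop := fun x => forall a, imp (cc L a) x = x.

Lemma meet_swap (L : Frame) (y b c : L) : le (meet (meet y b) c) (meet (meet y c) b).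
Proof.
  apply mg. apply mg. eapply ltr; apply ml. apply mr.
  eapply ltr. apply ml. apply mr.
Qed.

Lemma NN_sub (L : Frame) : sublocale (NN L).
Proof.
  split.
  - intros A HA a. apply le_antisym; [|apply le_imp].
    apply inf_glb. intros z Hz. apply ltr with (imp (cc L a) z); [|rewrite (HA z Hz a); apply le_refl].
    apply imp_mono_r. apply inf_lb. exact Hz.
  - intros b s Hs a. apply le_antisym; [|apply le_imp].
    apply adj1. apply ltr with (imp (cc L a) s); [|rewrite (Hs a); apply le_refl]. apply adj1.
    eapply ltr. apply meet_swap. apply adj2. apply adj2. apply le_refl.
Qed.

Theorem corollary4p3 (L : Frame) (S : L -> Prop) :
  DeMorganization S -> fitted S.
Proof.
  intros [HS Hmax].
  assert (SN : forall x, S x -> NN L x).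
  { intros x Hx a. apply (claimA L S HS). exact Hx. }
  assert (Nd : dense (NN L)).
  { destruct HS as [_ [Hd _]]. unfold dense in *. apply le_antisym; [|apply bot_le].
    rewrite <- Hd. apply inf_glb. intros s Hs. apply inf_lb. apply SN, Hs. }
  assert (NED : dense_ED_sublocale (NN L)).
  { split. apply NN_sub. split. exact Nd.
    intros x Hx.
    rewrite (sub_pc_eq L _ x (NN_sub L) Nd Hx).
    assert (Tpx : NN L (pc x)) by (apply (proj2 (NN_sub L)); apply T_bot; auto using NN_sub).
    rewrite (sub_pc_eq L _ (pc x) (NN_sub L) Nd Tpx).
    rewrite sub_top_eq by apply NN_sub.
    apply le_antisym; [apply le_top|].
    apply inf_glb. intros u [Hu Hb].
    rewrite <- (Hu x). apply adj1. eapply ltr. apply mr.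
    apply sup_least. intros y Hy. apply Hb. exact Hy. }
  exists (fun e => exists a, e = cc L a).
  intros x. split.
  - intros Hx e [a ->]. exists x. symmetry. apply (SN x Hx a).
  - intros H. apply (Hmax (NN L) NED). intros a.
    destruct (H (cc L a) (ex_intro _ a eq_refl)) as [b ->].
    apply imp_idem.
Qed.
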